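(* Let $n\ge2$. Then $H_n\rtimes S_n$ is generated by at most $3$ elements.
   Context: $\mathbb{N}=\{1,2,\dots\}$, $X_n=\{1,\dots,n\}\times\mathbb{N}$. $H_n$ is the group of bijections $g$ of $X_n$ with $z_i(g)\in\mathbb{N}$, $t_i(g)\in\mathbb{Z}$ such that $(i,m)g=(i,m+t_i(g))$ for all $m\ge z_i(g)$ (right action). Each $\sigma\in S_n$ acts on $X_n$ by $(i,m)\sigma=(i\sigma,m)$, and $H_n\rtimes S_n$ is the subgroup of $\mathrm{Sym}(X_n)$ generated by $H_n$ and these permutations. *)

(* Defs.v *)
From mathcomp Require Import all_boot all_order all_algebra all_fingroup.
Set Implicit Arguments. Unset Strict Implicit. Unset Printing Implicit Defensive.

(* X_n = {1..n} x N, encoded 0-indexed: the pair (i, m) : 'I_n * nat stands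
   for the paper's point (i+1, m+1). *)
Definition X (n : nat) : Type := ('I_n * nat)%type.

Definition Sym (n : nat) (f : X n -> X n) : Prop := bijective f.

Definition is_subgroup (n : nat) (P : (X n -> X n) -> Prop) : Prop :=
  [/\ (forall f, P f -> Sym f),
      P id,
      (forall f g, P f -> P g -> P (f \o g)) &
      (forall f g, P f -> cancel f g -> cancel g f -> P g)].

Definition gen (n : nat) (S : (X n -> X n) -> Prop) (f : X n -> X n) : Prop :=
  forall P, is_subgroup P -> (forall s, S s -> P s) -> P f.

Definition in_H (n : nat) (g : X n -> X n) : Prop :=
  Sym g /\
  exists (z : 'I_n -> nat) (t : 'I_n -> int),
    forall (i : 'I_n) (m : nat), z i <= m ->
      (g (i, m)).1 = i /\ ((g (i, m)).2 : int) = (m%:Z + t i)%R.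

Definition perm_act (n : nat) (s : 'S_n) : X n -> X n :=
  fun x => (s x.1, x.2).

Definition HS (n : nat) : (X n -> X n) -> Prop :=
  gen (fun f => in_H f \/ exists s : 'S_n, f = perm_act s).

(* Main.v *)
Require Import Defs.
From mathcomp Require Import all_boot all_order all_algebra all_fingroup.
From mathcomp Require Import zify.
Set Implicit Arguments. Unset Strict Implicit. Unset Printing Implicit Defensive.

Lemma sg_ext n (P : (X n -> X n) -> Prop) f f' :
  is_subgroup P -> P f -> f =1 f' -> P f'.
Proof.
case=> Psym P1 PM PV Pf ff'.
have [g fg gf] := Psym f Pf.
have Pg := PV f g Pf fg gf.
apply: (PV g f' Pg) => x; first by rewrite -ff' gf.
by rewrite -ff' fg.
Qed.

Lemma sg_comp n (P : (X n -> X n) -> Prop) f g :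
  is_subgroup P -> P f -> P g -> P (f \o g).
Proof. by case=> _ _ PM _; apply: PM. Qed.

Lemma sg_id n (P : (X n -> X n) -> Prop) : is_subgroup P -> P id.
Proof. by case. Qed.

Lemma sg_inv n (P : (X n -> X n) -> Prop) f g :
  is_subgroup P -> P f -> cancel f g -> cancel g f -> P g.
Proof. by case=> _ _ _ PV; apply: PV. Qed.

Lemma sg_iter n (P : (X n -> X n) -> Prop) f k :
  is_subgroup P -> P f -> P (iter k f).
Proof.
move=> HP Pf; elim: k => [|k IH]; first by apply: (sg_ext HP (sg_id HP)).
by apply: (sg_ext HP (sg_comp HP Pf IH)) => x.
Qed.

Lemma sg_conj n (P : (X n -> X n) -> Prop) h hi f :
  is_subgroup P -> P h -> cancel h hi -> cancel hi h -> P f -> P (h \o f \o hi).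
Proof.
move=> HP Ph hK hiK Pf.
exact: (sg_comp HP (sg_comp HP Ph Pf) (sg_inv HP Ph hK hiK)).
Qed.

Lemma iter_cancel (T : Type) (f g : T -> T) k : cancel f g -> cancel (iter k f) (iter k g).
Proof.
move=> fK; elim: k => [|k IH] x //.
by rewrite iterSr iterS fK IH.
Qed.

Definition swap {T : eqType} (x y : T) (z : T) : T :=
  if z == x then y else if z == y then x else z.

Lemma swapK (T : eqType) (x y : T) : cancel (swap x y) (swap x y).
Proof.
move=> z; rewrite /swap.
case: (z =P x) => [->|zx]; first by rewrite eqxx; case: (y =P x) => // ->.
case: (z =P y) => [->|zy]; first by rewrite eqxx.
by rewrite (introF eqP zx) (introF eqP zy).
Qed.

Lemma swapC (T : eqType) (x y : T) : swap x y =1 swap y x.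
Proof.
move=> z; rewrite /swap.
case ex: (z == x); case ey: (z == y) => //.
by rewrite -(eqP ex) -(eqP ey).
Qed.

Lemma swapxx (T : eqType) (x : T) : swap x x =1 id.
Proof. by move=> z; rewrite /swap; case: (z =P x) => [->|]. Qed.

Lemma swap_conj (T : eqType) (h hi : T -> T) x y :
  cancel h hi -> cancel hi h -> (h \o swap x y \o hi) =1 swap (h x) (h y).
Proof.
move=> hK hiK z /=.
have e a : (hi z == a) = (z == h a).
  by apply/eqP/eqP => [<-|->]; rewrite ?hiK ?hK.
by rewrite /swap !e; do 2 case: ifP => //; rewrite hiK.
Qed.

Lemma swapL (T : eqType) (x y : T) : swap x y x = y.
Proof. by rewrite /swap eqxx. Qed.
Lemma swapR (T : eqType) (x y : T) : swap x y y = x.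
Proof. by rewrite /swap eqxx; case: eqP => // ->. Qed.
Lemma swapD (T : eqType) (x y z : T) : z != x -> z != y -> swap x y z = z.
Proof. by rewrite /swap => /negbTE -> /negbTE ->. Qed.

Definition sf n (j : 'I_n.+2) (x : X n.+2) : X n.+2 :=
  let: (i, m) := x in
  if i == ord0 then (if m is m'.+1 then (ord0, m') else (j, 0))
  else if i == j then (j, m.+1) else (i, m).
Definition sb n (j : 'I_n.+2) (x : X n.+2) : X n.+2 :=
  let: (i, m) := x in
  if i == j then (if m is m'.+1 then (j, m') else (ord0, 0))
  else if i == ord0 then (ord0, m.+1) else (i, m).

Lemma sfK n (j : 'I_n.+2) : j != ord0 -> cancel (sf j) (sb j).
Proof.
move=> j0 [i m]; rewrite /sf /sb.
have j0' : (ord0 == j) = false by rewrite eq_sym (negbTE j0).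
case: (i =P ord0) => [->|/eqP i0].
  by case: m => [|m]; rewrite ?eqxx ?(negbTE j0) ?j0' ?eqxx.
case: (i =P j) => [->|/eqP ij]; first by rewrite eqxx.
by rewrite (negbTE ij) (negbTE i0).
Qed.

Lemma sbK n (j : 'I_n.+2) : j != ord0 -> cancel (sb j) (sf j).
Proof.
move=> j0 [i m]; rewrite /sf /sb.
have j0' : (ord0 == j) = false by rewrite eq_sym (negbTE j0).
case: (i =P j) => [->|/eqP ij].
  by case: m => [|m]; rewrite ?eqxx ?(negbTE j0) ?j0' ?eqxx.
case: (i =P ord0) => [->|/eqP i0]; first by rewrite eqxx.
by rewrite (negbTE ij) (negbTE i0).
Qed.

Lemma iter_sf0 n (j : 'I_n.+2) k m : iter k (sf j) (ord0, m + k) = (ord0, m).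
Proof.
elim: k m => [|k IH] m; first by rewrite addn0.
by rewrite iterS addnS -addSn IH /= ?eqxx.
Qed.

Lemma iter_sfj n (j : 'I_n.+2) k m : j != ord0 -> iter k (sf j) (j, m) = (j, m + k).
Proof.
move=> j0; elim: k => [|k IH]; first by rewrite addn0.
by rewrite iterS IH /= (negbTE j0) eqxx addnS.
Qed.

Lemma iter_sfo n (j i : 'I_n.+2) k m : i != ord0 -> i != j -> iter k (sf j) (i, m) = (i, m).
Proof.
move=> i0 ij; elim: k => [|k IH] //.
by rewrite iterS IH /= (negbTE i0) (negbTE ij).
Qed.

Lemma iter_sb0 n (j : 'I_n.+2) k m : j != ord0 -> iter k (sb j) (ord0, m) = (ord0, m + k).
Proof.
move=> j0; elim: k => [|k IH]; first by rewrite addn0.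
by rewrite iterS IH /= eq_sym (negbTE j0) ?eqxx addnS.
Qed.

Lemma iter_sbj n (j : 'I_n.+2) k m : iter k (sb j) (j, m + k) = (j, m).
Proof.
elim: k m => [|k IH] m; first by rewrite addn0.
by rewrite iterS addnS -addSn IH /= ?eqxx.
Qed.

Lemma iter_sbo n (j i : 'I_n.+2) k m : i != ord0 -> i != j -> iter k (sb j) (i, m) = (i, m).
Proof.
move=> i0 ij; elim: k => [|k IH] //.
by rewrite iterS IH /= (negbTE i0) (negbTE ij).
Qed.

Definition o1 {n} : 'I_n.+2 := lift ord0 ord0.

Lemma perm_actK n (s : 'S_n) : cancel (perm_act s) (perm_act s^-1%g).
Proof. by move=> [i m]; rewrite /perm_act /= permK. Qed.
Lemma perm_actKV n (s : 'S_n) : cancel (perm_act s^-1%g) (perm_act s).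
Proof. by move=> [i m]; rewrite /perm_act /= permKV. Qed.

Lemma perm_act_sf n (s : 'S_n.+2) j : s ord0 = ord0 ->
  perm_act s \o sf j \o perm_act s^-1 =1 sf (s j).
Proof.
move=> s0 [i m]; rewrite /perm_act /=.
have e a : ((s^-1)%g i == a) = (i == s a).
  by apply/eqP/eqP => [<-|->]; rewrite ?permK ?permKV.
rewrite !e s0.
case: (i == ord0); first by case: m => [|m] /=; rewrite ?s0.
by case: (i == s j) => //=; rewrite permKV.
Qed.

Lemma all_swaps n (P : (X n.+2 -> X n.+2) -> Prop) :
  is_subgroup P -> (forall j, j != ord0 -> P (sf j)) ->
  P (swap (ord0, 0) (o1, 0)) -> (forall s, P (perm_act s)) ->
  forall x y, P (swap x y).
Proof.
move=> HP Psf Pt Pperm.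
have Pswap_conj h hi x y : P h -> cancel h hi -> cancel hi h -> P (swap x y) ->
    P (swap (h x) (h y)).
  move=> Ph hK hiK Pxy.
  exact: (sg_ext HP (sg_conj HP Ph hK hiK Pxy) (swap_conj _ _ hK hiK)).
have Psym x y : P (swap x y) -> P (swap y x).
  by move=> Pxy; apply: (sg_ext HP Pxy (swapC x y)).
have Psb j : j != ord0 -> P (sb j).
  by move=> j0; exact: (sg_inv HP (Psf j j0) (sfK j0) (sbK j0)).
have Pe j : j != ord0 -> P (swap (ord0, 0) (j, 0)).
  move=> j0.
  have := Pswap_conj _ _ _ _ (Pperm (tperm o1 j)) (perm_actK _) (perm_actKV _) Pt.
  by rewrite /perm_act /= tpermL tpermD // eq_sym.
have Pa0 m : P (swap (ord0, m) (ord0, m.+1)).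
  apply: Psym.
  have o10 : (o1 : 'I_n.+2) != ord0 by [].
  have := Pswap_conj _ _ _ _ (sg_iter m.+1 HP (Psb _ o10))
     (iter_cancel m.+1 (sbK o10)) (iter_cancel m.+1 (sfK o10)) (Pe _ o10).
  have -> : iter m.+1 (sb o1) (ord0, 0) = (ord0, m.+1) :> X n.+2.
    by rewrite iter_sb0.
  have -> : iter m.+1 (sb o1) (o1, 0) = (ord0, m) :> X n.+2.
    by rewrite iterSr /= iter_sb0.
  by [].
have Paj j m : j != ord0 -> P (swap (j, m) (j, m.+1)).
  move=> j0.
  have := Pswap_conj _ _ _ _ (sg_iter m.+1 HP (Psf _ j0))
     (iter_cancel m.+1 (sfK j0)) (iter_cancel m.+1 (sbK j0)) (Pe _ j0).
  have -> : iter m.+1 (sf j) (ord0, 0) = (j, m) :> X n.+2.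
    by rewrite iterSr /= iter_sfj.
  have -> : iter m.+1 (sf j) (j, 0) = (j, m.+1) :> X n.+2.
    by rewrite iter_sfj.
  by [].
pose p : X n.+2 := (ord0, 0).
have Pid : P (swap p p) by apply: (sg_ext HP (sg_id HP)) => z; rewrite swapxx.
have Pp0 m : P (swap p (ord0, m)).
  elim: m => [|m IH] //.
  have := Pswap_conj _ _ _ _ IH (swapK _ _) (swapK _ _) (Pa0 m).
  rewrite swapR swapD //.
  by rewrite /p ?xpair_eqE /= ?eqxx /=; move: {IH} m; elim.
have Ppj j m : j != ord0 -> P (swap p (j, m)).
  move=> j0; elim: m => [|m IH]; first exact: Pe.
  have := Pswap_conj _ _ _ _ IH (swapK _ _) (swapK _ _) (Paj j m j0).
  have h1 : (j, m.+1) != p by rewrite /p xpair_eqE (negbTE j0).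
  have h2 : (j, m.+1) != (j, m) by rewrite xpair_eqE eqxx /=; clear; elim: m.
  by rewrite swapR swapD.
have Pp y : P (swap p y).
  case: y => j m; case: (j =P ord0) => [->|/eqP j0]; [exact: Pp0 | exact: Ppj].
move=> x y.
case: (y =P p) => [->|/eqP yp]; first exact: Psym.
have := Pswap_conj _ _ _ _ (Pp x) (swapK _ _) (swapK _ _) (Pp y).
rewrite swapL.
case: (y =P x) => [->|/eqP yx]; last by rewrite swapD.
by move=> _; apply: (sg_ext HP (sg_id HP)) => z; rewrite swapxx.
Qed.

Definition L n (Z : nat) : seq (X n) := [seq (i, m) | i <- enum 'I_n, m <- iota 0 Z].

Lemma memL n Z (x : X n) : (x \in L n Z) = (x.2 < Z).
Proof.
case: x => i m /=; apply/allpairsP/idP => [[[i' m'] /= [_ ]]|mZ].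
  by rewrite mem_iota add0n => mZ [_ ->].
by exists (i, m); rewrite mem_enum mem_iota add0n mZ.
Qed.

Lemma uniqL n Z : uniq (L n Z).
Proof.
apply: allpairs_uniq; rewrite ?enum_uniq ?iota_uniq //.
by move=> [a b] [c d] _ _.
Qed.

Lemma sizeL n Z : size (L n Z) = n * Z.
Proof. by rewrite size_allpairs size_enum_ord size_iota. Qed.

Lemma count_lt (T : eqType) (a b : pred T) (s : seq T) x :
  subpred a b -> x \in s -> b x -> ~~ a x -> count a s < count b s.
Proof.
move=> sub; elim: s => //= y s IH; rewrite inE => /orP [/eqP <-|xs] bx ax.
  by rewrite (negbTE ax) bx add0n add1n ltnS; apply: sub_count.
rewrite -addnS; apply: leq_add; last exact: IH.
by case ay: (a y) => //; rewrite (sub y ay).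
Qed.

Lemma finitary n (P : (X n -> X n) -> Prop) :
  is_subgroup P -> (forall x y, P (swap x y)) ->
  forall Z g, bijective g -> (forall x, Z <= x.2 -> g x = x) -> P g.
Proof.
move=> HP Psw Z g0 bg0 fix0.
move: {2}(count (fun x => g0 x != x) (L n Z)) (leqnn (count (fun x => g0 x != x) (L n Z))) => k.
elim: k g0 bg0 fix0 => [|k IH] g bg fixg ck.
  apply: (sg_ext HP (sg_id HP)) => x /=; apply/esym.
  case: (ltnP x.2 Z) => [xZ|]; last exact: fixg.
  move: ck; rewrite leqNgt -has_count => /hasPn /(_ x); rewrite memL => /(_ xZ).
  by rewrite negbK => /eqP.
have ginj := bij_inj bg.
case hs: (has (fun x => g x != x) (L n Z)); last first.
  apply: IH => //; move: hs; rewrite has_count; case: count => //.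
case/hasP: hs => x; rewrite memL => xZ gx.
have gxZ : (g x).2 < Z.
  rewrite ltnNge; apply/negP => /fixg /ginj e; by rewrite e eqxx in gx.
pose g' := swap x (g x) \o g.
have P' : P g'.
  apply: IH.
  - by apply: bij_comp => //; exists (swap x (g x)); apply: swapK.
  - move=> y yZ; rewrite /g' /= (fixg y yZ) swapD //.
      by apply/eqP => eyx; move: yZ; rewrite eyx leqNgt xZ.
    by apply/eqP => eyx; move: yZ; rewrite eyx leqNgt gxZ.
  - rewrite -ltnS; apply: leq_trans ck.
    apply: (@count_lt _ _ _ _ x); rewrite ?memL //.
      move=> y; rewrite /g' /=; apply: contraNN => /eqP gy; rewrite gy /swap.
      case: ifP => [/eqP yx|_]; first by rewrite -yx gy.
      case: ifP => [/eqP ygx|_] //.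
      by apply/eqP; apply: ginj; rewrite gy ygx.
    by rewrite /g' /= swapR eqxx.
apply: (sg_ext HP (sg_comp HP (Psw x (g x)) P')) => y.
by rewrite /g' /= swapK.
Qed.

Lemma no_shift n (g : X n.+2 -> X n.+2) Z d : injective g -> 0 < d ->
  (forall m, Z <= m -> g (ord0, m + d) = (ord0, m)) ->
  (forall j m, j != ord0 -> Z <= m -> g (j, m) = (j, m)) -> False.
Proof.
move=> ginj d0 h0 hj.
pose K := Z + d.
pose s2 := [seq ((ord0 : 'I_n.+2), Z + i) | i <- iota 0 d] : seq (X n.+2).
have inL x : x \in L n.+2 K -> g x \in L n.+2 K.
  rewrite !memL => xK; rewrite ltnNge; apply/negP => gK.
  move: gK; case E: (g x) => [i M] /= MK.
  case: (i =P ord0) => [i0|/eqP i0].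
    subst i; have ZM : Z <= M by rewrite /K in MK; lia.
    have /ginj ex : g (ord0, M + d) = g x by rewrite E; apply: h0.
    by move: xK; rewrite -ex /= /K; lia.
  have ZM : Z <= M by rewrite /K in MK; lia.
  have /ginj ex : g (i, M) = g x by rewrite E; apply: hj.
  by move: xK; rewrite -ex /= /K; lia.
have U : uniq (map g (L n.+2 K) ++ s2).
  rewrite cat_uniq (map_inj_uniq ginj) uniqL /=; apply/andP; split.
    apply/hasPn => y; rewrite /s2 => /mapP [i]; rewrite mem_iota add0n => id ->.
    apply/mapP => [[x xL]]; rewrite -h0 ?leq_addr // => /ginj ex.
    by move: xL; rewrite memL -ex /= /K; lia.
  rewrite /s2 map_inj_uniq ?iota_uniq //.
  by move=> a b [] /eqP; rewrite eqn_add2l => /eqP.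
have S : {subset map g (L n.+2 K) ++ s2 <= L n.+2 K}.
  move=> y; rewrite mem_cat => /orP [/mapP [x xL ->]|]; first exact: inL.
  rewrite /s2 => /mapP [i]; rewrite mem_iota memL => /andP[_ ilt] -> /=.
  by rewrite /K; lia.
by have := uniq_leq_size U S; rewrite size_cat !size_map size_iota sizeL; lia.
Qed.

Definition Hdata n (g : X n -> X n) (z : 'I_n -> nat) (t : 'I_n -> int) :=
  forall i m, z i <= m -> (g (i, m)).1 = i /\ ((g (i, m)).2 : int) = (m%:Z + t i)%R.

Lemma Hpt n (g : X n -> X n) z t i m (b : nat) :
  Hdata g z t -> z i <= m -> (b : int) = (m%:Z + t i)%R -> g (i, m) = (i, b).
Proof.
move=> Hg zm eb; have [e1 e2] := Hg i m zm.
move: e1 e2; rewrite -eb; case: (g (i, m)) => a c /= -> [->] //.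
Qed.

Lemma Hval n (g : X n -> X n) z t i m :
  Hdata g z t -> z i <= m -> exists b : nat, g (i, m) = (i, b) /\ (b : int) = (m%:Z + t i)%R.
Proof.
move=> Hg zm; have [e1 e2] := Hg i m zm.
exists (g (i, m)).2; split => //; move: e1; case: (g (i, m)) => a c /= -> //.
Qed.

Lemma H_base n (P : (X n.+2 -> X n.+2) -> Prop) :
  is_subgroup P -> (forall x y, P (swap x y)) ->
  forall g z t, bijective g -> Hdata g z t -> (forall j, j != ord0 -> t j = 0%R) -> P g.
Proof.
move=> HP Psw g z t bg Hg tj.
pose Z := \max_i z i.
have zZ i : z i <= Z := leq_bigmax i.
have hj j m : j != ord0 -> Z <= m -> g (j, m) = (j, m).
  move=> j0 Zm; apply: (Hpt Hg (leq_trans (zZ j) Zm)).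
  by rewrite tj // GRing.addr0.
have [bi gK giK] := bg.
case E0: (t ord0) => [k|k].
  case: k E0 => [|k] E0.
    apply: (finitary HP Psw bg (Z := Z)) => [[i m]] /= Zm.
    case: (i =P ord0) => [->|/eqP i0]; last exact: hj.
    by apply: (Hpt Hg (leq_trans (zZ _) Zm)); rewrite E0; lia.
  exfalso; apply: (no_shift (g := bi) (Z := Z) (d := k.+1) (can_inj giK)) => //.
    move=> m Zm; apply: (can_inj gK); rewrite giK.
    by apply/esym; apply: (Hpt Hg (leq_trans (zZ _) Zm)); rewrite E0; lia.
  move=> j m j0 Zm; apply: (can_inj gK); rewrite giK.
  by apply/esym; apply: hj.
exfalso; apply: (no_shift (g := g) (Z := Z) (d := k.+1) (bij_inj bg)) => //.
  move=> m Zm; apply: (Hpt Hg); first by apply: leq_trans (zZ _) _; lia.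
  rewrite E0 NegzE; lia.
Qed.

Lemma H_all n (P : (X n.+2 -> X n.+2) -> Prop) :
  is_subgroup P -> (forall x y, P (swap x y)) -> (forall j, j != ord0 -> P (sf j)) ->
  forall g, in_H g -> P g.
Proof.
move=> HP Psw Psf g [bg [z [t Hg]]].
pose cnt (t : 'I_n.+2 -> int) := count (fun j => (j != ord0) && (t j != 0%R)) (enum 'I_n.+2).
have Pbase g1 z1 t1 : bijective g1 -> Hdata g1 z1 t1 -> cnt t1 = 0 -> P g1.
  move=> bg1 Hg1 c0; apply: (H_base HP Psw bg1 Hg1) => j j0.
  move: c0 => /eqP; rewrite -leqn0 leqNgt -has_count => /hasPn /(_ j (mem_enum _ j)).
  by rewrite j0 /= negbK => /eqP.
suff main : forall k g1 z1 t1, bijective g1 -> Hdata g1 z1 t1 -> cnt t1 <= k -> P g1.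
  exact: (main _ g z t bg Hg (leqnn _)).
elim=> [|k IH] g1 z1 t1 bg1 Hg1 ck.
  by apply: (Pbase g1 z1 t1 bg1 Hg1); apply/eqP; rewrite -leqn0.
case hs: (has (fun j => (j != ord0) && (t1 j != 0%R)) (enum 'I_n.+2)); last first.
  apply: (Pbase g1 z1 t1 bg1 Hg1); move: hs; rewrite has_count.
  by rewrite /cnt; case: count.
case/hasP: hs => j _ /andP [j0 tj0].
pose t' i := if i == j then 0%R else if i == ord0 then (t1 ord0 + t1 j)%R else t1 i.
have j0' : (ord0 == j) = false by rewrite eq_sym (negbTE j0).
have ct' : cnt t' <= k.
  rewrite -ltnS; apply: leq_trans ck; apply: (@count_lt _ _ _ _ j).
  - move=> i /andP [i0]; rewrite /t'; case: (i =P j) => [->|_]; first by rewrite eqxx.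
    by rewrite (negbTE i0).
  - exact: mem_enum.
  - by rewrite j0.
  - by rewrite /t' /= eqxx /= andbF.
case E: (t1 j) tj0 => [a|a] tj0.
  pose g' := iter a (sb j) \o g1.
  have Hg' : Hdata g' z1 t'.
    move=> i m zm; have [b [gb eb]] := Hval Hg1 zm; rewrite /g' /= gb /t'.
    case: (i =P j) => [ij|/eqP ij].
      subst i; have -> : b = m + a by move: eb; rewrite E; lia.
      by rewrite iter_sbj; split => //=; lia.
    case: (i =P ord0) => [i0|/eqP i0].
      subst i; rewrite iter_sb0 //; split => //; move: eb; rewrite E /=; lia.
    by rewrite iter_sbo.
  have bg' : bijective g'.
    apply: bij_comp => //; exists (iter a (sf j)); apply: iter_cancel.
      exact: sbK. exact: sfK.
  have Pg' : P g' by apply: (IH g' z1 t').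
  apply: (sg_ext HP (sg_comp HP (sg_iter a HP (Psf j j0)) Pg')) => y.
  by rewrite /g' /= (iter_cancel a (sbK j0)).
pose g' := iter a.+1 (sf j) \o g1.
pose z' i := if i == ord0 then z1 ord0 + a.+1 + `|t1 ord0|%N else z1 i.
have Hg' : Hdata g' z' t'.
  move=> i m; rewrite /g' /= /t' /z'.
  case: (i =P j) => [ij|/eqP ij].
    subst i; rewrite (negbTE j0) => zm.
    have [b [gb eb]] := Hval Hg1 zm; rewrite gb.
    have e : b + a.+1 = m by move: eb; rewrite E NegzE; lia.
    by rewrite -iterS iter_sfj // e; split => //=; lia.
  case: (i =P ord0) => [i0|/eqP i0].
    subst i => zm.
    have zm' : z1 ord0 <= m by lia.
    have [b [gb eb]] := Hval Hg1 zm'; rewrite gb.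
    have e : b = (b - a.+1) + a.+1 by move: eb; lia.
    rewrite -iterS e iter_sf0; split => //=; move: eb; rewrite E NegzE; lia.
  move=> zm.
  have [b [gb eb]] := Hval Hg1 zm; rewrite gb.
  by rewrite -iterS iter_sfo.
have bg' : bijective g'.
  apply: bij_comp => //; exists (iter a.+1 (sb j)); apply: iter_cancel.
    exact: sfK. exact: sbK.
have Psb : P (sb j) by exact: (sg_inv HP (Psf j j0) (sfK j0) (sbK j0)).
have Pg' : P g' by apply: (IH g' z' t').
apply: (sg_ext HP (sg_comp HP (sg_iter a.+1 HP Psb) Pg')) => y.
exact: (iter_cancel a.+1 (sfK j0) (g1 y)).
Qed.

Definition cyc n : 'S_n.+2 := perm (@ordS_inj n.+2).

Lemma cycE n (k : nat) : k.+1 < n.+2 -> cyc n (inord k) = inord k.+1.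
Proof.
move=> kn; apply/val_inj; rewrite permE /= !inordK ?modn_small //; lia.
Qed.

Lemma permact_all n (P : (X n.+2 -> X n.+2) -> Prop) :
  is_subgroup P -> P (perm_act (tperm ord0 o1)) -> P (perm_act (cyc n)) ->
  forall s, P (perm_act s).
Proof.
move=> HP Pt Pc.
have QM s t : P (perm_act s) -> P (perm_act t) -> P (perm_act (s * t)%g).
  move=> Ps Pt'; apply: (sg_ext HP (sg_comp HP Pt' Ps)) => [[i m]].
  by rewrite /perm_act /= permM.
have QV s : P (perm_act s) -> P (perm_act s^-1%g).
  by move=> Ps; apply: (sg_inv HP Ps (perm_actK s) (perm_actKV s)).
have QJ u v : P (perm_act u) -> P (perm_act v) -> P (perm_act (u ^ v)%g).
  by move=> Pu Pv; rewrite conjgE; apply: QM (QV _ Pv) (QM _ _ Pu Pv).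
have Q1 : P (perm_act 1%g).
  by apply: (sg_ext HP (sg_id HP)) => [[i m]]; rewrite /perm_act /= perm1.
have i0e : inord 0 = ord0 :> 'I_n.+2 by apply/val_inj; rewrite /= inordK.
have Qad i : i.+1 < n.+2 -> P (perm_act (tperm (inord i) (inord i.+1))).
  elim: i => [|i IH] lt.
    have -> : inord 0 = ord0 :> 'I_n.+2 by apply/val_inj; rewrite /= inordK.
    have -> : inord 1 = o1 :> 'I_n.+2 by apply/val_inj; rewrite /= inordK.
    exact: Pt.
  have := QJ _ _ (IH (ltnW lt)) Pc.
  by rewrite tpermJ !cycE //; lia.
have Q0 j : 0 < j < n.+2 -> P (perm_act (tperm ord0 (inord j))).
  elim: j => [|j IH] // /andP [_ lt].
  case: j IH lt => [|j] IH lt; first by rewrite -{1}i0e; exact: (Qad 0).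
  have := QJ _ _ (IH (ltac:(apply/andP; split => //; lia))) (Qad j.+1 lt).
  rewrite tpermJ tpermL tpermD //.
    by apply/eqP => /(congr1 val); rewrite /= inordK //; lia.
  by apply/eqP => /(congr1 val); rewrite /= inordK //; lia.
have Q0' j : P (perm_act (tperm ord0 j)).
  case: (j =P ord0) => [->|/eqP j0]; first by rewrite tperm1.
  have -> : j = inord j by rewrite inord_val.
  apply: Q0; rewrite ltn_ord andbT lt0n; apply: contra j0 => /eqP e.
  by apply/eqP; apply/val_inj.
have Qt i j : P (perm_act (tperm i j)).
  case: (i =P ord0) => [->|/eqP i0] //.
  case: (j =P ord0) => [->|/eqP j0]; first by rewrite tpermC.
  case: (i =P j) => [->|/eqP ij]; first by rewrite tperm1.
  have := QJ _ _ (Q0' j) (Q0' i).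
  by rewrite tpermJ tpermL tpermD // eq_sym.
move=> s; have [ts -> _] := prod_tpermP s.
elim: ts => [|t ts IH]; first by rewrite big_nil.
by rewrite big_cons; apply: QM.
Qed.

Definition o2 {n} : 'I_n.+3 := lift ord0 (lift ord0 ord0).

Lemma commutator n :
  (sf o2 \o sf o1 \o sb o2 \o sb o1) =1 swap ((o1 : 'I_n.+3), 0) (o2, 0).
Proof.
move=> [[[|[|[|k]]] Hi] m]; case: m => [|m] //=; rewrite /swap /=; try (congr pair; apply/val_inj; done).
Qed.

Lemma sf_in_H n : in_H (sf (o1 : 'I_n.+2)).
Proof.
split; first by exists (sb o1); [apply: sfK | apply: sbK].
exists (fun _ => 1), (fun i => if i == ord0 then (-1)%R else if i == o1 then 1%R else 0%R).
move=> i [|m] // _; rewrite /sf.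
case: (i =P ord0) => [->|/eqP i0] /=; first by split => //; lia.
case: (i =P o1) => [->|/eqP i1] /=; first by split => //; lia.
by split => //; lia.
Qed.

Lemma swap0_in_H n : in_H (swap ((ord0 : 'I_n.+2), 0) (o1, 0)).
Proof.
split; first by exists (swap (ord0, 0) (o1, 0)); apply: swapK.
exists (fun _ => 1), (fun _ => 0%R).
move=> i [|m] // _; rewrite swapD ?xpair_eqE ?andbF //.
by split => //=; lia.
Qed.

Lemma Psf_all n (P : (X n.+2 -> X n.+2) -> Prop) :
  is_subgroup P -> P (sf o1) -> (forall s, P (perm_act s)) ->
  forall j, j != ord0 -> P (sf j).
Proof.
move=> HP P1 Pp j j0.
have s0 : tperm o1 j ord0 = ord0 by rewrite tpermD // eq_sym.
have := sg_conj HP (Pp (tperm o1 j)) (perm_actK _) (perm_actKV _) P1.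
move=> H; apply: (sg_ext HP H) => x.
by rewrite perm_act_sf // tpermL.
Qed.

Lemma key n (P : (X n.+2 -> X n.+2) -> Prop) :
  is_subgroup P -> P (sf o1) -> P (swap (ord0, 0) (o1, 0)) ->
  P (perm_act (tperm ord0 o1)) -> P (perm_act (cyc n)) ->
  forall f, (in_H f \/ exists s : 'S_n.+2, f = perm_act s) -> P f.
Proof.
move=> HP P1 Pt Pp Pc.
have Pperm := permact_all HP Pp Pc.
have Psf := Psf_all HP P1 Pperm.
have Psw := all_swaps HP Psf Pt Pperm.
move=> f [Hf|[s ->]]; last exact: Pperm.
exact: (H_all HP Psw Psf Hf).
Qed.

Lemma cyc2 : cyc 0 = tperm ord0 o1.
Proof.
apply/permP => i; rewrite permE.
case: i => [[|[|k]] Hi] //.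
  have -> : Ordinal Hi = ord0 by apply/val_inj.
  by rewrite tpermL; apply/val_inj.
have -> : Ordinal Hi = o1 by apply/val_inj.
by rewrite tpermR; apply/val_inj.
Qed.

Unset Implicit Arguments.
Theorem lemma3p1 (n : nat) : 2 <= n ->
  exists a b c : X n -> X n,
    forall f : X n -> X n,
      gen (fun s => s = a \/ s = b \/ s = c) f <-> HS f.
Proof.
case: n => [|[|n]] // _.
case: n => [|n].
  exists (sf o1), (swap (ord0, 0) (o1, 0)), (perm_act (tperm ord0 o1)) => f; split.
    move=> Hg Q HQ HQS; apply: (Hg Q HQ) => s [->|[->|->]]; apply: HQS.
    - by left; apply: sf_in_H.
    - by left; apply: swap0_in_H.
    - by right; exists (tperm ord0 o1).
  move=> Hs P HP HPS; apply: (Hs P HP).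
  apply: key HP (HPS _ (or_introl erefl)) (HPS _ (or_intror (or_introl erefl)))
    (HPS _ (or_intror (or_intror erefl))) _.
  by rewrite cyc2; apply: HPS; right; right.
exists (sf o1), (perm_act (tperm ord0 o1)), (perm_act (cyc n.+1)) => f; split.
  move=> Hg Q HQ HQS; apply: (Hg Q HQ) => s [->|[->|->]]; apply: HQS.
  - by left; apply: sf_in_H.
  - by right; exists (tperm ord0 o1).
  - by right; exists (cyc n.+1).
move=> Hs P HP HPS; apply: (Hs P HP).
have P1 : P (sf o1) by apply: HPS; left.
have Pp : P (perm_act (tperm ord0 o1)) by apply: HPS; right; left.
have Pc : P (perm_act (cyc n.+1)) by apply: HPS; right; right.
have Pperm := permact_all HP Pp Pc.
have Psf := Psf_all HP P1 Pperm.
have Psb j : j != ord0 -> P (sb j).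
  by move=> j0; exact: (sg_inv HP (Psf j j0) (sfK j0) (sbK j0)).
have Pcomm : P (swap (o1, 0) (o2, 0)).
  apply: (sg_ext HP _ (@commutator n)).
  apply: (sg_comp HP); last exact: Psb.
  apply: (sg_comp HP); last exact: Psb.
  by apply: (sg_comp HP); apply: Psf.
have Pt : P (swap (o1, 0) (ord0, 0)).
  have := sg_ext HP (sg_conj HP (Pperm (tperm o2 ord0)) (perm_actK _) (perm_actKV _) Pcomm)
    (swap_conj _ _ (perm_actK _) (perm_actKV _)).
  by rewrite /perm_act /= tpermD // tpermL.
apply: key HP P1 (sg_ext HP Pt (swapC _ _)) Pp Pc.
Qed.
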